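(* Let $\phi\colon\mathbb{A}^n\to V$ be a morphism such that every $\phi(b)$ has a center, $\psi\colon G\times\mathbb{A}^n\to V$, $(g,b)\mapsto g(\phi(b))$, and $X=\{(g,\omega)\in G\times\operatorname{Img}\psi: g(\omega)\in W\}$. Let \[\eta\colon X\to\mathbb{A}^2\times\operatorname{Img}\psi,\qquad \Bigl(\left(\begin{smallmatrix} M & v\\ 0&1\end{smallmatrix}\right),\omega\Bigr)\mapsto(-M^{-1}v,\omega).\] Then \[\operatorname{Img}\eta = \{(\tilde v,\omega) : \omega(\tilde v) = 0,\ d\omega(\tilde v)=0 \text{ and } \operatorname{rank} F_2(\omega,\tilde v) = 2\}.\]
   Context: $K$ is an algebraically closed field. $V$ is the space of differential forms $P\,dx+Q\,dy$ with $P,Q\in K[x,y]$ of degree $\le 3$; $W\subset V$ is the set of Poincaré forms $(x+P_2+P_3)\,dx+(y+Q_2+Q_3)\,dy$, $P_i,Q_i$ homogeneous of degree $i$. $G=\mathrm{Aff}_2=\{\left(\begin{smallmatrix} M & v\\ 0&1\end{smallmatrix}\right): M\in GL_2(K),v\in K^2\}$ acts on $V$ by affine coordinate changes $g\binom{x}{y}=M\binom{x}{y}+v$, $g\binom{dx}{dy}=M\binom{dx}{dy}$. A form has a center at $a$ if $P(a)=Q(a)=0$ and there exist formal power series $\mu,F$ centered at $a$ with $\mu(a)\ne0$ and $dF=\mu\,(P\,dx+Q\,dy)$. $\omega(\tilde v)=0$ means $P(\tilde v)=Q(\tilde v)=0$; $d\omega=(Q_x-P_y)\,dx\wedge dy$.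 When $\omega(\tilde v)=0$ and $d\omega(\tilde v)=0$, the linear part of $\omega$ at $\tilde v$ is exact, equal to $dF_2$ for a quadratic form $F_2=F_2(\omega,\tilde v)$ homogeneous in $x-\tilde v_x,y-\tilde v_y$ (the quadric associated to $\omega$ at $\tilde v$; when $\omega$ has a center at $\tilde v$ it agrees up to a nonzero scalar with the degree-2 part of a first integral without constant and linear terms). Its rank is invariant under affine coordinate changes. *)

(* Defs.v *)
From HB Require Import structures.
From mathcomp Require Import all_boot all_order all_algebra.
From mathcomp Require Import mpoly.
Set Implicit Arguments. Unset Strict Implicit. Unset Printing Implicit Defensive.
Import Order.TTheory GRing.Theory Num.Theory.
Local Open Scope ring_scope.

Section Forms.
Variable K : fieldType.

(* A polynomial differential dform  P dx + Q dy,  P, Q in K[x,y]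
   (variable 0 is x, variable 1 is y). *)
Record dform := DForm { fP : {mpoly K[2]}; fQ : {mpoly K[2]} }.

Definition env (a : 'cV[K]_2) : 'I_2 -> K := fun i => a i 0.

(* V : forms with deg P, deg Q <= 3  (msize = 1 + total degree) *)
Definition in_V (w : dform) : Prop :=
  (msize (fP w) <= 4)%N /\ (msize (fQ w) <= 4)%N.

Definition in_W (w : dform) : Prop :=
  exists P2 P3 Q2 Q3 : {mpoly K[2]},
    [/\ P2 \is 2.-homog, P3 \is 3.-homog, Q2 \is 2.-homog & Q3 \is 3.-homog] /\
    fP w = 'X_0 + P2 + P3 /\ fQ w = 'X_1 + Q2 + Q3.

(* The affine coordinate change g = (M, v): new coordinates
   (x', y')^T = M (x, y)^T + v, hence (dx', dy')^T = M (dx, dy)^T.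
   g(w) is w written in the new coordinates: with N = M^-1, the old
   coordinates are N((x',y')^T - v) and (dx,dy)^T = N (dx',dy')^T, so
   P' = (P N11 + Q N21) o g^-1,  Q' = (P N12 + Q N22) o g^-1. *)
Definition old_coord (M : 'M[K]_2) (v : 'cV[K]_2) (i : 'I_2) : {mpoly K[2]} :=
  \sum_(j < 2) ((invmx M) i j)%:MP * ('X_j - (v j 0)%:MP).

Definition act (M : 'M[K]_2) (v : 'cV[K]_2) (w : dform) : dform :=
  let t := [tuple old_coord M v i | i < 2] in
  let N := invmx M in
  DForm ((fP w * (N 0 0)%:MP + fQ w * (N 1 0)%:MP) \mPo t)
       ((fP w * (N 0 1)%:MP + fQ w * (N 1 1)%:MP) \mPo t).

(* formal power series in two variables (u, v), coefficient of u^i v^j *)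
Definition ps := nat -> nat -> K.
Definition ps_mul (f g : ps) : ps := fun i j =>
  \sum_(k < i.+1) \sum_(l < j.+1) f k l * g (i - k)%N (j - l)%N.
Definition ps_du (f : ps) : ps := fun i j => f i.+1 j *+ i.+1.
Definition ps_dv (f : ps) : ps := fun i j => f i j.+1 *+ j.+1.

Definition mnm2 (i j : nat) : 'X_{1..2} := [multinom [tuple i; j]].
Definition ps_of (p : {mpoly K[2]}) : ps := fun i j => p@_(mnm2 i j).

Definition shift (a : 'cV[K]_2) (p : {mpoly K[2]}) : {mpoly K[2]} :=
  p \mPo [tuple 'X_i + (a i 0)%:MP | i < 2].

(* w has a center at a: P(a) = Q(a) = 0 and there are formal power series
   mu, F centered at a with mu(a) <> 0 and dF = mu (P dx + Q dy). *)
Definition has_center_at (w : dform) (a : 'cV[K]_2) : Prop :=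
  (fP w).@[env a] = 0 /\ (fQ w).@[env a] = 0 /\
  exists mu F : ps, mu 0%N 0%N != 0 /\
    (forall i j, ps_du F i j = ps_mul mu (ps_of (shift a (fP w))) i j) /\
    (forall i j, ps_dv F i j = ps_mul mu (ps_of (shift a (fQ w))) i j).

Definition has_center (w : dform) : Prop := exists a, has_center_at w a.

Definition is_morphism (n : nat) (phi : 'cV[K]_n -> dform) : Prop :=
  (forall b, in_V (phi b)) /\
  exists cP cQ : 'X_{1..2} -> {mpoly K[n]},
    forall b m, (fP (phi b))@_m = (cP m).@[fun i => b i 0] /\
                (fQ (phi b))@_m = (cQ m).@[fun i => b i 0].

Definition in_img_psi (n : nat) (phi : 'cV[K]_n -> dform) (w : dform) : Prop :=
  exists (M : 'M[K]_2) (v : 'cV[K]_2) (b : 'cV[K]_n),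
    M \in unitmx /\ w = act M v (phi b).

Definition in_img_eta (n : nat) (phi : 'cV[K]_n -> dform)
    (vt : 'cV[K]_2) (w : dform) : Prop :=
  exists (M : 'M[K]_2) (v : 'cV[K]_2),
    [/\ M \in unitmx, in_img_psi phi w, in_W (act M v w)
      & vt = - (invmx M *m v)].

(* d w = (Q_x - P_y) dx /\ dy, evaluated at vt *)
Definition dform_at (w : dform) (vt : 'cV[K]_2) : K :=
  ((fQ w)^`M(0) - (fP w)^`M(1)).@[env vt].

(* The quadric F2(w, vt): the linear part of w at vt is
   (a X + b Y) dx + (c X + d Y) dy with X = x - vt_x, Y = y - vt_y,
   a = P_x(vt), b = P_y(vt), c = Q_x(vt), d = Q_y(vt); when d w(vt) = 0
   (c = b) it equals dF2 with F2 = a/2 X^2 + b X Y + d/2 Y^2. *)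
Definition quadric (w : dform) (vt : 'cV[K]_2) : {mpoly K[2]} :=
  let a := ((fP w)^`M(0)).@[env vt] in
  let b := ((fP w)^`M(1)).@[env vt] in
  let d := ((fQ w)^`M(1)).@[env vt] in
  let X := 'X_0 - (vt 0 0)%:MP in
  let Y := 'X_1 - (vt 1 0)%:MP in
  (a / 2)%:MP * X ^+ 2 + b%:MP * X * Y + (d / 2)%:MP * Y ^+ 2.

(* rank of a binary quadratic dform q homogeneous in X = x - vt_x,
   Y = y - vt_y: rank of its symmetric (Gram) matrix, read off from the
   coefficients of q expanded in X, Y. *)
Definition qform_rank (q : {mpoly K[2]}) (vt : 'cV[K]_2) : nat :=
  let q' := shift vt q in
  \rank (\matrix_(i < 2, j < 2)
           (if i == j then q'@_(mnm2 (2 * (i == 0 :> nat))%N (2 * (i == 1 :> nat))%N)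
            else q'@_(mnm2 1 1) / 2)).

End Forms.

(* Main.v *)
Require Import Defs.
From HB Require Import structures.
From mathcomp Require Import all_boot all_order all_algebra.
From mathcomp Require Import mpoly.
From mathcomp Require Import zify ring.
Import GRing.Theory.
Local Open Scope ring_scope.

Module Helpers.
Set Implicit Arguments. Unset Strict Implicit. Unset Printing Implicit Defensive.
Import Order.TTheory Num.Theory.

Section Helpers.
Variable K : fieldType.
Implicit Types p q : {mpoly K[2]}.

Lemma ord2P (i : 'I_2) : i = 0 \/ i = 1.
Proof. case: i => [[|[|//]] Hi]; [left|right]; exact: val_inj. Qed.

Lemma big2 (T : Type) (op : SemiGroup.com_law T) (idx : T) (F : 'I_2 -> T) : True.
Proof. by []. Qed.

Lemma sum2 (F : 'I_2 -> K) : \sum_(i < 2) F i = F 0 + F 1.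
Proof. by rewrite big_ord_recl big_ord1; congr (_ + F _); apply: val_inj. Qed.

Lemma sum2P (F : 'I_2 -> {mpoly K[2]}) : \sum_(i < 2) F i = F 0 + F 1.
Proof. by rewrite big_ord_recl big_ord1; congr (_ + F _); apply: val_inj. Qed.

Lemma prod2P (F : 'I_2 -> {mpoly K[2]}) : \prod_(i < 2) F i = F 0 * F 1.
Proof. by rewrite big_ord_recl big_ord1; congr (_ * F _); apply: val_inj. Qed.

Lemma prod2 (F : 'I_2 -> K) : \prod_(i < 2) F i = F 0 * F 1.
Proof. by rewrite big_ord_recl big_ord1; congr (_ * F _); apply: val_inj. Qed.

Lemma mnm2_eq (m1 m2 : 'X_{1..2}) : m1 0 = m2 0 -> m1 1 = m2 1 -> m1 = m2.
Proof. by move=> h0 h1; apply/mnmP => i; case: (ord2P i) => ->. Qed.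

Lemma meval0E p : p.@[fun _ => 0] = p@_0.
Proof.
elim/mpolyind: p => [|c m p _ _ IH]; first by rewrite meval0 mcoeff0.
rewrite mevalD mevalZ mcoeffD mcoeffZ IH mevalX mcoeffX prod2.
congr (c * _ + _).
have [->|nm] := eqVneq m 0%MM; first by rewrite !mnm0E !expr0 mulr1.
case: (boolP (m 0 == 0%N)) => [/eqP h0|h0]; last by rewrite expr0n (negPf h0) mul0r.
case: (boolP (m 1 == 0%N)) => [/eqP h1|h1]; last by rewrite (expr0n _ (m 1)) (negPf h1) mulr0.
by case/eqP: nm; apply: mnm2_eq; rewrite mnm0E.
Qed.

Lemma mderiv_at0 p (i : 'I_2) : (p^`M(i)).@[fun _ => 0] = p@_U_(i).
Proof. by rewrite meval0E mcoeff_deriv add0m mnm0E mulr1n. Qed.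

End Helpers.

Section Helpers2.
Variable K : fieldType.
Implicit Types p q : {mpoly K[2]}.

Lemma msizeM_le' p q : (msize (p * q) <= (msize p + msize q).-1)%N.
Proof.
have [->|nz_p ] := eqVneq p 0; first by rewrite mul0r msize0.
have [->|nz_q ] := eqVneq q 0; first by rewrite mulr0 msize0.
have [->|nz_pq] := eqVneq (p * q) 0; first by rewrite msize0.
rewrite -!mlead_deg // addSn addnS /= ltnS -mdegD.
by have /lemc_mdeg := mleadM_le p q.
Qed.

Lemma msize_exp q a : (msize q <= 2)%N -> (msize (q ^+ a) <= a.+1)%N.
Proof.
move=> hq; elim: a => [|a IH]; first by rewrite expr0 msize1.
rewrite exprS; have := msizeM_le' q (q ^+ a); lia.
Qed.

Lemma msize_comp p (lq : 2.-tuple {mpoly K[2]}) :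
  (forall i, msize (tnth lq i) <= 2)%N -> (msize (p \mPo lq) <= msize p)%N.
Proof.
move=> hl; rewrite comp_mpolyE; apply: leq_trans (msize_sum _ _ _) _.
apply/bigmax_leqP_seq => m hm _.
apply: leq_trans (msizeZ_le _ _) _.
rewrite prod2P; apply: leq_trans (msizeM_le' _ _) _.
have := leq_add (msize_exp (m 0) (hl 0)) (msize_exp (m 1) (hl 1)).
have := msize_mdeg_lt hm; rewrite mdegE big_ord_recl big_ord1.
have -> : lift ord0 ord0 = 1 :> 'I_2 by apply: val_inj.
have -> : ord0 = 0 :> 'I_2 by []. move=> h1 h2; lia.
Qed.
End Helpers2.

Section Helpers3.
Variable K : fieldType.
Implicit Types p q : {mpoly K[2]}.

Lemma msize_oc (M : 'M[K]_2) v i : (msize (old_coord M v i) <= 2)%N.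
Proof.
rewrite /old_coord; apply: leq_trans (msize_sum _ _ _) _.
apply/bigmax_leqP => j _; rewrite mul_mpolyC; apply: leq_trans (msizeZ_le _ _) _.
apply: leq_trans (msizeD_le _ _) _; rewrite geq_max msizeX mdeg1 msizeN msizeC.
by case: (_ != 0).
Qed.

Lemma msize_mulC p c : (msize (p * c%:MP) <= msize p)%N.
Proof. by rewrite mulrC mul_mpolyC msizeZ_le. Qed.

Lemma msize_act (M : 'M[K]_2) v w : in_V w -> in_V (act M v w).
Proof.
case=> hP hQ; rewrite /in_V /act /=.
have hl : forall i, (msize (tnth [tuple old_coord M v i | i < 2] i) <= 2)%N.
  by move=> i; rewrite tnth_mktuple msize_oc.
split; (apply: leq_trans (msize_comp _ hl) _; apply: leq_trans (msizeD_le _ _) _;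
  rewrite geq_max; apply/andP; split; apply: leq_trans (msize_mulC _ _) _ => //).
Qed.

Lemma mderiv_exp q a i : (q ^+ a)^`M(i) = a%:R * q ^+ a.-1 * q^`M(i).
Proof.
elim: a => [|a IH]; first by rewrite expr0 -mpolyC1 mderivC mul0r mul0r.
rewrite exprS mderivM IH; case: a IH => [|a] IH /=.
  by rewrite !expr0; ring.
rewrite exprS; ring.
Qed.

Lemma mderiv_comp p (lq : 2.-tuple {mpoly K[2]}) k :
  (p \mPo lq)^`M(k) = \sum_(i < 2) (p^`M(i) \mPo lq) * (tnth lq i)^`M(k).
Proof.
elim/mpolyind: p => [|c m p _ _ IH].
  by rewrite comp_mpoly0 mderiv0 big1 // => i _; rewrite mderiv0 comp_mpoly0 mul0r.
rewrite comp_mpolyD mderivD IH comp_mpolyZ mderivZ.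
rewrite [RHS](eq_bigr (fun i => c *: ((('X_[m])^`M(i) \mPo lq) * (tnth lq i)^`M(k))
   + (p^`M(i) \mPo lq) * (tnth lq i)^`M(k))); last first.
  by move=> i _; rewrite mderivD mderivZ comp_mpolyD comp_mpolyZ mulrDl scalerAl.
rewrite big_split /=; congr (_ + _); rewrite -scaler_sumr; congr (_ *: _).
rewrite comp_mpolyX prod2P sum2P !mderivX !comp_mpolyZ !comp_mpolyX !prod2P.
rewrite mderivM !mderiv_exp !mnmBE !mnm1E /=.
rewrite !subn0 !subn1 -!mul_mpolyC !mpolyC_nat; ring.
Qed.

End Helpers3.

Section Helpers4.
Variable K : fieldType.
Implicit Types p q : {mpoly K[2]}.
Variables (M : 'M[K]_2) (v : 'cV[K]_2).
Let N := invmx M.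
Let t := [tuple old_coord M v i | i < 2].
Let vt := - (N *m v).

Lemma oc_eval0 i : (old_coord M v i).@[fun _ => 0] = vt i 0.
Proof.
rewrite /old_coord (big_morph _ (mevalD _) (meval0 _)) /vt !mxE -sumrN; apply: eq_bigr => j _.
by rewrite mevalM mevalC mevalB mevalC mevalXU sub0r mulrN.
Qed.

Lemma mderivXU (j k : 'I_2) : ('X_j : {mpoly K[2]})^`M(k) = ((j == k)%:R)%:MP.
Proof.
rewrite mderivX mnm1E; case: eqP => [->|_]; last by rewrite scale0r.
have -> : (U_(k) - U_(k))%MM = 0%MM.
  by apply/mnmP => l; rewrite mnmBE subnn mnm0E.
by rewrite mpolyX0 scale1r mpolyC1. 
Qed.

Lemma oc_deriv i k : (old_coord M v i)^`M(k) = (N i k)%:MP.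
Proof.
rewrite /old_coord (big_morph _ (mderivD _) (mderiv0 _ _)).
rewrite (eq_bigr (fun j => (N i j * (j == k)%:R)%:MP)); last first.
  by move=> j _; rewrite mderiv_mulC mderivB mderivC subr0 mderivXU mpolyCM.
rewrite -(big_morph _ (@mpolyCD 2 K) (@mpolyC0 2 K)); congr (_%:MP).
rewrite (bigD1 k) //= eqxx mulr1 big1 ?addr0 // => j /negPf ->.
by rewrite mulr0.
Qed.

Lemma act_eval0 P Q a b :
  ((P * a%:MP + Q * b%:MP) \mPo t).@[fun _ => 0] =
  P.@[env vt] * a + Q.@[env vt] * b.
Proof.
rewrite comp_mpoly_meval (meval_eq _ (v2 := env vt)); last first.
  by move=> i; rewrite /t tnth_mktuple oc_eval0.
by rewrite mevalD !mevalM !mevalC.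
Qed.

Lemma act_deriv0 P Q a b k :
  (((P * a%:MP + Q * b%:MP) \mPo t)^`M(k)).@[fun _ => 0] =
  \sum_(i < 2) ((P^`M(i)).@[env vt] * a + (Q^`M(i)).@[env vt] * b) * N i k.
Proof.
rewrite mderiv_comp (big_morph _ (mevalD _) (meval0 _)); apply: eq_bigr => i _.
rewrite mevalM /t tnth_mktuple oc_deriv mevalC; congr (_ * _).
rewrite mderivD !mderivM !mderivC !mulr0 !addr0 -/t.
rewrite comp_mpoly_meval (meval_eq _ (v2 := env vt)); last first.
  by move=> j; rewrite /t tnth_mktuple oc_eval0.
by rewrite mevalD !mevalM !mevalC.
Qed.

End Helpers4.

Section Helpers5.
Variable K : fieldType.
Implicit Types p q : {mpoly K[2]}.

Lemma mcoeff_pihomog d p m :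
  (pihomog mdeg d p)@_m = if mdeg m == d then p@_m else 0.
Proof.
elim/mpolyind: p => [|c m' p _ _ IH]; first by rewrite pihomog0 mcoeff0; case: ifP.
rewrite pihomogD linearZ /= pihomogX mcoeffD mcoeffZ IH mcoeffD mcoeffZ mcoeffX.
have [<-|ne] := eqVneq m' m.
  by case: ifP => _; rewrite ?mcoeffX ?mcoeff0 ?eqxx ?mulr0 ?add0r ?addr0.
by case: ifP => _; case: ifP => _; rewrite ?mcoeffX ?mcoeff0 ?(negPf ne) ?mulr0 ?add0r ?addr0.
Qed.

Lemma U_neq0 (j : 'I_2) : ((U_(j))%MM == 0%MM :> 'X_{1..2}) = false.
Proof. by apply/negP => /eqP h; have := mdeg1 j; rewrite h mdeg0. Qed.

Lemma U_eq (i j : 'I_2) : ((U_(i))%MM == (U_(j))%MM :> 'X_{1..2}) = (i == j).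
Proof.
apply/eqP/eqP => [h|->] //; have := congr1 (fun m : 'X_{1..2} => m j) h.
by rewrite !mnm1E eqxx; case: eqP.
Qed.

Lemma W_coef j p P2 P3 : P2 \is 2.-homog -> P3 \is 3.-homog ->
  p = 'X_j + P2 + P3 -> p@_0 = 0 /\ forall i, p@_U_(i) = (j == i)%:R.
Proof.
move=> h2 h3 ->; split.
  have z2 : P2@_0 = 0 by apply: (dhomog_nemf_coeff h2); rewrite /= mdeg0.
  have z3 : P3@_0 = 0 by apply: (dhomog_nemf_coeff h3); rewrite /= mdeg0.
  by rewrite !mcoeffD mcoeffX U_neq0 z2 z3 !addr0.
move=> i.
have z2 : P2@_U_(i) = 0 by apply: (dhomog_nemf_coeff h2); rewrite /= mdeg1.
have z3 : P3@_U_(i) = 0 by apply: (dhomog_nemf_coeff h3); rewrite /= mdeg1.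
by rewrite !mcoeffD mcoeffX U_eq z2 z3 !addr0.
Qed.

Lemma W_split j p : (msize p <= 4)%N -> p@_0 = 0 ->
  (forall i, p@_U_(i) = (j == i)%:R) ->
  p = 'X_j + pihomog mdeg 2 p + pihomog mdeg 3 p.
Proof.
move=> hs h0 h1; rewrite {1}(pihomog_partitionE hs) !big_ord_recl big_ord0 /= addr0.
have -> : pihomog mdeg 0 p = 0.
  apply/mpolyP => m; rewrite mcoeff_pihomog mcoeff0 mdeg_eq0.
  by case: eqP => // ->.
have -> : pihomog mdeg 1 p = 'X_j.
  apply/mpolyP => m; rewrite mcoeff_pihomog mcoeffX.
  case: (mdeg1P m) => [[i /eqP ->]|ne]; first by rewrite h1 U_eq.
  case: eqP => // hm; case: ne; exists j; rewrite hm //.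
by rewrite add0r !addrA.
Qed.

End Helpers5.

Definition Eqs (K : fieldType) (a b c d p q r s : K) : Prop :=
  [/\ (a * p + c * r) * p + (b * p + d * r) * r = 1,
      (a * p + c * r) * q + (b * p + d * r) * s = 0,
      (a * q + c * s) * p + (b * q + d * s) * r = 0 &
      (a * q + c * s) * q + (b * q + d * s) * s = 1].

Lemma key_forward (K : fieldType) (a b c d p q r s : K) :
  Eqs a b c d p q r s -> [/\ b = c, a * d - b * c != 0 & p * s - q * r != 0].
Proof.
case=> e1 e2 e3 e4.
set E1 := (a * p + c * r) * p + (b * p + d * r) * r in e1.
set E2 := (a * p + c * r) * q + (b * p + d * r) * s in e2.
set E3 := (a * q + c * s) * p + (b * q + d * s) * r in e3.
set E4 := (a * q + c * s) * q + (b * q + d * s) * s in e4.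
have hD : (p * s - q * r) ^+ 2 * (a * d - b * c) = E1 * E4 - E2 * E3.
  by rewrite /E1 /E2 /E3 /E4; ring.
rewrite e1 e2 e3 e4 mulr1 mulr0 subr0 in hD.
have hB : (b - c) * (p * s - q * r) = E2 - E3 by rewrite /E2 /E3; ring.
rewrite e2 e3 subr0 in hB.
have nD : p * s - q * r != 0.
  by apply/eqP => h; move: hD; rewrite h expr0n /= mul0r => /eqP; rewrite eq_sym oner_eq0.
split => //.
  by move/eqP: hB; rewrite mulf_eq0 (negPf nD) orbF subr_eq0 => /eqP.
by apply/eqP => h; move: hD; rewrite h mulr0 => /eqP; rewrite eq_sym oner_eq0.
Qed.

Lemma sqrt_ex (K : closedFieldType) (x : K) : exists y : K, y ^+ 2 = x.
Proof.
have [y hy] := @solve_monicpoly K 2 (fun i => if i == 0%N then x else 0) isT.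
by exists y; rewrite hy big_ord_recl big_ord1 /= expr0 mulr1 mul0r addr0.
Qed.

Lemma key_backward (K : closedFieldType) (a b d : K) :
  (2%:R : K) != 0 -> a * d - b * b != 0 -> exists p q r s : K, Eqs a b b d p q r s.
Proof.
move=> h2 hdet.
have [a0|na] := eqVneq a 0.
  have [d0|nd] := eqVneq d 0.
    have nb : b != 0 by apply: contraNneq hdet => ->; rewrite a0 d0; apply/eqP; ring.
    have [e he] := sqrt_ex (-1 : K).
    exists 1, e, (1 / (2%:R * b)), (- e / (2%:R * b)); rewrite a0 d0; split.
    - by field; rewrite nb h2.
    - by field; rewrite nb h2.
    - by field; rewrite nb h2.
    - rewrite -[RHS]opprK -he; by field; rewrite nb h2.
  have [u hu] := sqrt_ex d.
  have [t ht] := sqrt_ex (- b * b / d).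
  have nb : b != 0 by apply: contraNneq hdet => ->; rewrite a0; apply/eqP; ring.
  have nu : u != 0 by apply: contraNneq nd => h; rewrite -hu h; apply/eqP; ring.
  have nt : t != 0.
    apply: contraNneq nb => h; move: ht; rewrite h expr0n /= => /eqP.
    rewrite eq_sym mulf_eq0 invr_eq0 (negPf nd) orbF mulf_eq0 oppr_eq0 orbb.
    by [].
  exists (1 / t), 0, (- b / (d * t)), (1 / u); rewrite a0; split.
  - apply: (@eq_trans _ _ (- b * b / d / t ^+ 2)); last by rewrite ht divff // !mulf_eq0 oppr_eq0 invr_eq0 (negPf nd) (negPf nb).
    by field; rewrite nd nt.
  - by field; rewrite nd nt nu.
  - by field; rewrite nd nt nu.
  - by rewrite -hu; field; rewrite nu.
have [s0 hs] := sqrt_ex a.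
have [t ht] := sqrt_ex ((a * d - b * b) / a).
have ns : s0 != 0 by apply: contraNneq na => h; rewrite -hs h; apply/eqP; ring.
have nt : t != 0.
  apply: contraNneq hdet => h; move: ht; rewrite h expr0n /= => /eqP.
  by rewrite eq_sym mulf_eq0 invr_eq0 (negPf na) orbF.
exists (1 / s0), (- b / (a * t)), 0, (1 / t); split.
- by rewrite -hs; field; rewrite ns.
- by field; rewrite na nt ns.
- by field; rewrite na nt ns.
- apply: (@eq_trans _ _ ((a * d - b * b) / a / t ^+ 2)); last by rewrite ht divff // mulf_eq0 invr_eq0 (negPf na) (negPf hdet).
  by field; rewrite na nt.
Qed.

Notation i0 := (0 : 'I_2).
Notation i1 := (1 : 'I_2).
Section H7.
Variable K : fieldType.

Lemma det2 (A : 'M[K]_2) : \det A = A 0 0 * A 1 1 - A 0 1 * A 1 0.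
Proof.
rewrite (expand_det_row _ 0) sum2 /cofactor !det_mx11 !mxE /=.
have -> : lift 0 0 = 1 :> 'I_2 by apply: val_inj.
have -> : lift 1 0 = 0 :> 'I_2 by apply: val_inj.
rewrite expr0 expr1 mul1r; ring.
Qed.

Lemma comp_mpolyM' (lq : 2.-tuple {mpoly K[2]}) (p q : {mpoly K[2]}) :
  (p * q) \mPo lq = (p \mPo lq) * (q \mPo lq).
Proof. exact: rmorphM. Qed.

Lemma shift_quad (vt : 'cV[K]_2) (al be ga : K) :
  let X := 'X_0 - (vt 0 0)%:MP in let Y := 'X_1 - (vt 1 0)%:MP in
  shift vt (al%:MP * X ^+ 2 + be%:MP * X * Y + ga%:MP * Y ^+ 2) =
  al%:MP * 'X_0 ^+ 2 + be%:MP * 'X_0 * 'X_1 + ga%:MP * 'X_1 ^+ 2.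
Proof.
move=> X Y; rewrite /X /Y /shift !expr2 !comp_mpolyD !comp_mpolyM' !comp_mpolyB !comp_mpolyC !comp_mpolyXU.
by rewrite -!tnth_nth !tnth_mktuple !addrK.
Qed.

Lemma mnm_eq2 (m1 m2 : 'X_{1..2}) : (m1 == m2) = (m1 i0 == m2 i0) && (m1 i1 == m2 i1).
Proof.
apply/eqP/andP => [->|[/eqP h0 /eqP h1]]; first by rewrite !eqxx.
exact: mnm2_eq.
Qed.

Lemma mnm2E0 i j : mnm2 i j i0 = i. Proof. by []. Qed.
Lemma mnm2E1 i j : mnm2 i j i1 = j. Proof. by []. Qed.

Lemma quad_coef (al be ga : K) :
  let p := al%:MP * 'X_0 ^+ 2 + be%:MP * 'X_0 * 'X_1 + ga%:MP * 'X_1 ^+ 2 : {mpoly K[2]} in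
  [/\ p@_(mnm2 2 0) = al, p@_(mnm2 0 2) = ga & p@_(mnm2 1 1) = be].
Proof.
move=> p; rewrite /p -mulrA !mul_mpolyC -mpolyXD !mpolyXn !mcoeffD !mcoeffZ !mcoeffX.
rewrite !mnm_eq2 !mulmnE !mnmDE !mnm1E !mnm2E0 !mnm2E1 /=.
by split; ring.
Qed.

Lemma rank2_det (A : 'M[K]_2) : (\rank A = 2%N) <-> (\det A != 0).
Proof.
rewrite -unitfE -unitmxE; split => [h|/mxrank_unit //].
by rewrite -row_free_unit /row_free h.
Qed.

Lemma rank_quadric (w : dform K) (vt : 'cV[K]_2) : (2%:R : K) != 0 ->
  (qform_rank (quadric w vt) vt = 2%N <->
   ((fP w)^`M(0)).@[env vt] * ((fQ w)^`M(1)).@[env vt]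
   - ((fP w)^`M(1)).@[env vt] * ((fP w)^`M(1)).@[env vt] != 0).
Proof.
move=> h2.
have h4 : (4%:R : K) != 0.
  by rewrite (_ : 4%:R = 2%:R * 2%:R) ?mulf_neq0 // -natrM.
rewrite /qform_rank /quadric shift_quad rank2_det det2 !mxE /=.
have [c1 c2 c3] := quad_coef (((fP w)^`M(0)).@[env vt] / 2%:R)
   (((fP w)^`M(1)).@[env vt]) (((fQ w)^`M(1)).@[env vt] / 2%:R).
rewrite c1 c2 c3.
set a := ((fP w)^`M(0)).@[env vt]; set b := ((fP w)^`M(1)).@[env vt];
set d := ((fQ w)^`M(1)).@[env vt].
have -> : a / 2%:R * (d / 2%:R) - b / 2%:R * (b / 2%:R) = (a * d - b * b) / 4%:R.
  by field; rewrite h4 h2.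
by rewrite mulf_eq0 invr_eq0 negb_or h4 andbT.
Qed.

End H7.


Definition mx2 (K : fieldType) (p q r s : K) : 'M[K]_2 :=
  \matrix_(i < 2, j < 2) (if i == 0 then (if j == 0 then p else q) else (if j == 0 then r else s)).
Arguments mx2 {K}.

Lemma act_coefs {K : fieldType} (M : 'M[K]_2) (v : 'cV[K]_2) (w : dform K) :
  let N := invmx M in let vt := - (N *m v) in
  let a := ((fP w)^`M(0)).@[env vt] in let b := ((fP w)^`M(1)).@[env vt] in
  let c := ((fQ w)^`M(0)).@[env vt] in let d := ((fQ w)^`M(1)).@[env vt] in
  let p := N 0 0 in let q := N 0 1 in let r := N 1 0 in let s := N 1 1 in
  [/\ (fP (act M v w))@_0 = (fP w).@[env vt] * p + (fQ w).@[env vt] * r,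
      (fQ (act M v w))@_0 = (fP w).@[env vt] * q + (fQ w).@[env vt] * s &
   [/\ (fP (act M v w))@_U_(0) = (a * p + c * r) * p + (b * p + d * r) * r,
      (fP (act M v w))@_U_(1) = (a * p + c * r) * q + (b * p + d * r) * s,
      (fQ (act M v w))@_U_(0) = (a * q + c * s) * p + (b * q + d * s) * r &
      (fQ (act M v w))@_U_(1) = (a * q + c * s) * q + (b * q + d * s) * s]].
Proof.
move=> N vt a b c d p q r s; rewrite /act /=.
rewrite -!meval0E -!mderiv_at0 !act_eval0 !act_deriv0 !sum2.
by split.
Qed.

Lemma det_mx2 (K : fieldType) (p q r s : K) : \det (mx2 p q r s) = p * s - q * r.
Proof. by rewrite det2 !mxE. Qed.


End Helpers.
Import Helpers.

Theorem lemma5p15 (K : closedFieldType) (char2 : (2%:R : K) != 0)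
    (n : nat) (phi : 'cV[K]_n -> dform K)
    (Hphi : is_morphism phi) (Hcenter : forall b, has_center (phi b)) :
  forall (vt : 'cV[K]_2) (w : dform K),
    in_img_eta phi vt w <->
    [/\ in_img_psi phi w,
        (fP w).@[env vt] = 0 /\ (fQ w).@[env vt] = 0,
        dform_at w vt = 0
      & qform_rank (quadric w vt) vt = 2%N].
Proof.
move=> vt w; split.
  case=> M [v [hM hpsi hW hvt]].
  case: hW => [P2 [P3 [Q2 [Q3 [[h2 h3 h2' h3'] [eP eQ]]]]]].
  have [cP0 cPU] := W_coef h2 h3 eP.
  have [cQ0 cQU] := W_coef h2' h3' eQ.
  have [eP0 eQ0 [eP1 eP2 eQ1 eQ2]] := act_coefs (K:=K) M v w.
  rewrite -hvt in eP0 eQ0 eP1 eP2 eQ1 eQ2.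
  set a := ((fP w)^`M(0)).@[env vt] in eP1 eP2 eQ1 eQ2.
  set b := ((fP w)^`M(1)).@[env vt] in eP1 eP2 eQ1 eQ2.
  set c := ((fQ w)^`M(0)).@[env vt] in eP1 eP2 eQ1 eQ2.
  set d := ((fQ w)^`M(1)).@[env vt] in eP1 eP2 eQ1 eQ2.
  set p := invmx M 0 0 in eP0 eQ0 eP1 eP2 eQ1 eQ2.
  set q := invmx M 0 1 in eP0 eQ0 eP1 eP2 eQ1 eQ2.
  set r := invmx M 1 0 in eP0 eQ0 eP1 eP2 eQ1 eQ2.
  set s := invmx M 1 1 in eP0 eQ0 eP1 eP2 eQ1 eQ2.
  have hE : Eqs a b c d p q r s.
    by split; [rewrite -eP1 cPU | rewrite -eP2 cPU | rewrite -eQ1 cQU | rewrite -eQ2 cQU].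
  have [hbc hdet hD] := key_forward hE.
  rewrite cP0 in eP0; rewrite cQ0 in eQ0.
  set x := (fP w).@[env vt] in eP0 eQ0 *; set y := (fQ w).@[env vt] in eP0 eQ0 *.
  have hx : x * (p * s - q * r) = 0.
    by rewrite (_ : x * _ = (x * p + y * r) * s - (x * q + y * s) * r); [rewrite -eP0 -eQ0; ring | ring].
  have hy : y * (p * s - q * r) = 0.
    by rewrite (_ : y * _ = (x * q + y * s) * p - (x * p + y * r) * q); [rewrite -eP0 -eQ0; ring | ring].
  move/eqP: hx; rewrite mulf_eq0 (negPf hD) orbF => /eqP hx.
  move/eqP: hy; rewrite mulf_eq0 (negPf hD) orbF => /eqP hy.
  split => //.
    by rewrite /dform_at mevalB -/c -/b hbc subrr.
  by apply/rank_quadric => //; rewrite -/a -/b -/d {2}hbc.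
case=> hpsi [hP0 hQ0] hd hr.
set a := ((fP w)^`M(0)).@[env vt]; set b := ((fP w)^`M(1)).@[env vt].
set c := ((fQ w)^`M(0)).@[env vt]; set d := ((fQ w)^`M(1)).@[env vt].
have hcb : c = b by apply/eqP; rewrite -subr_eq0; move: hd; rewrite /dform_at mevalB => ->.
have hdet : a * d - b * b != 0 by move/rank_quadric: hr => /(_ char2).
have [p [q [r [s hE]]]] := key_backward char2 hdet.
have [_ _ hD] := key_forward hE.
pose N := mx2 p q r s.
have hN : N \in unitmx by rewrite unitmxE unitfE det_mx2.
pose M := invmx N; pose v := - (M *m vt).
have hMN : invmx M = N by rewrite invmxK.
have hvt : - (invmx M *m v) = vt.
  by rewrite hMN /v mulmxN opprK /M mulmxA mulmxV // mul1mx.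
have hVw : in_V w.
  by case: hpsi => M0 [v0 [b0 [_ ->]]]; apply: msize_act; case: Hphi => h _; apply: h.
have [hsP hsQ] := msize_act M v hVw.
exists M, v; split => //; first by rewrite unitmx_inv.
have [eP0 eQ0 [eP1 eP2 eQ1 eQ2]] := act_coefs (K:=K) M v w.
rewrite hvt hMN /N !mxE /= in eP0 eQ0 eP1 eP2 eQ1 eQ2.
rewrite -/a -/b -/c -/d hcb in eP1 eP2 eQ1 eQ2.
case: hE => e1 e2 e3 e4.
exists (pihomog mdeg 2 (fP (act M v w))), (pihomog mdeg 3 (fP (act M v w))),
       (pihomog mdeg 2 (fQ (act M v w))), (pihomog mdeg 3 (fQ (act M v w))).
split; first by split; apply: pihomogP.
split; apply: W_split => //.
- by rewrite eP0 hP0 hQ0; ring.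
- by move=> i; case: (ord2P i) => ->; rewrite ?eP1 ?eP2.
- by rewrite eQ0 hP0 hQ0; ring.
- by move=> i; case: (ord2P i) => ->; rewrite ?eQ1 ?eQ2.
Qed.
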